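(* Let $f(y_1,\dots,y_m)\in\mathbb{R}\langle Y\rangle$ be a multilinear (ordinary, noncommutative) polynomial, and consider its image \[ f(\mathrm{Sym}_2)=\{f(a_1,\dots,a_m): a_1,\dots,a_m\in M_2(\mathbb{R}) \text{ symmetric}\}. \] Let $I$ be the identity matrix, $e_1=\begin{pmatrix}1&0\\0&-1\end{pmatrix}$, $e_2=\begin{pmatrix}0&1\\1&0\end{pmatrix}$ and $E=e_1e_2=\begin{pmatrix}0&1\\-1&0\end{pmatrix}$. Then $f(\mathrm{Sym}_2)$ is one of the following: (1) $\{0\}$; (2) the set $\mathbb{R}\cdot E$ of all skew-symmetric matrices; (3) $\mathbb{R}\cdot I$, the set of scalar matrices; (4) the set $\mathrm{span}\{e_1,e_2\}$ of traceless symmetric matrices; (5) $\mathbb{R}\cdot I\oplus\mathbb{R}\cdot E$; (6) $sl_2(\mathbb{R})$, the set of all traceless matrices; (7) the set of all symmetric matrices; (8) a set containing a basis of $M_2(\mathbb{R})$.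
   Context: $\mathbb{R}\langle Y\rangle$ denotes the free associative algebra over $\mathbb{R}$ on the variables $Y=\{y_1,y_2,\dots\}$. A polynomial is multilinear if every variable occurs exactly once in each of its monomials. Symmetric and skew-symmetric refer to the transpose. *)

(* Defs.v *)
From HB Require Import structures.
From mathcomp Require Import all_boot all_order all_algebra all_fingroup.
From mathcomp Require Import reals.
Set Implicit Arguments. Unset Strict Implicit. Unset Printing Implicit Defensive.
Import Order.TTheory GRing.Theory Num.Theory.
Local Open Scope ring_scope.

(* A multilinear polynomial f(y_1,...,y_m) in the free algebra R<Y> is uniquely
   f = \sum_{sigma in S_m} c_sigma y_{sigma(0)} y_{sigma(1)} ... y_{sigma(m-1)};
   we represent it by its coefficient family c : {ffun 'S_m -> R}. *)
Definition multilin_eval (R : nzRingType) (m n : nat) (c : {ffun 'S_m -> R})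
  (a : 'I_m -> 'M[R]_n.+1) : 'M[R]_n.+1 :=
  \sum_(s : 'S_m) c s *: \prod_(i < m) a (s i).

Definition image_Sym2 (R : nzRingType) (m : nat) (c : {ffun 'S_m -> R})
  (X : 'M[R]_2) : Prop :=
  exists a : 'I_m -> 'M[R]_2, (forall i, (a i)^T = a i) /\ X = multilin_eval c a.

Definition e1 (R : nzRingType) : 'M[R]_2 :=
  \matrix_(i < 2, j < 2) (if i == j then (if i == 0 :> nat then 1 else -1) else 0).
Definition e2 (R : nzRingType) : 'M[R]_2 :=
  \matrix_(i < 2, j < 2) (if i == j then 0 else 1).
Definition Emx (R : nzRingType) : 'M[R]_2 := e1 R * e2 R.

(* Main.v *)
Require Import Defs.
From HB Require Import structures.
From mathcomp Require Import all_boot all_order all_algebra all_fingroup.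
From mathcomp Require Import reals.
From mathcomp Require Import ring lra zify.
From Stdlib Require Classical_Prop.
Import Order.TTheory GRing.Theory Num.Theory.
Local Open Scope ring_scope.
Set Implicit Arguments. Unset Strict Implicit.

Lemma ord2P (i : 'I_2) : i = ord0 \/ i = ord_max.
Proof. by case: i => [[|[|k]]] h; [left|right|]; try apply: val_inj. Qed.

Ltac mxcomp := apply/matrixP => ? ?;
  match goal with |- _ ?i ?j = _ => case: (ord2P i) => ->; case: (ord2P j) => -> end;
  do 4 (rewrite ?mxE ?big_ord_recr ?big_ord0 /=); try ring.

Definition tm (R : realType) (b1 b2 : bool) : 'M[R]_2 :=
  if b1 then (if b2 then Emx R else e1 R) else (if b2 then e2 R else 1).
Definition bm (R : realType) (k : nat) : 'M[R]_2 :=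
  match k with 0 => 1 | 1 => e1 R | _ => e2 R end.

Lemma table (R : realType) b1 b2 k : exists eps : R,
  tm R b1 b2 * bm R k = eps *: tm R (b1 (+) (k == 1)%N) (b2 (+) (1 < k)%N).
Proof.
case: k => [|[|k]] /=.
  by exists 1; rewrite mulr1 scale1r !addbF.
  exists (if b2 then -1 else 1); rewrite addbT addbF.
  case: b1; case: b2 => /=; rewrite ?scale1r ?scaleN1r ?mul1r /tm /Emx /e1 /e2; mxcomp.
exists 1; rewrite addbT addbF.
by case: b1; case: b2 => /=; rewrite ?scale1r ?scaleN1r ?mul1r /tm /Emx /e1 /e2; mxcomp.
Qed.

Definition cnt1 n (w : 'I_n -> nat) : nat := (\sum_(i < n) (w i == 1)%N)%N.
Definition cnt2 n (w : 'I_n -> nat) : nat := (\sum_(i < n) (1 < w i)%N)%N.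

Lemma prod_bm (R : realType) n (w : 'I_n -> nat) : exists eps : R,
  \prod_(i < n) bm R (w i) = eps *: tm R (odd (cnt1 w)) (odd (cnt2 w)).
Proof.
elim: n w => [|n IH] w.
  by exists 1; rewrite big_ord0 /cnt1 /cnt2 !big_ord0 scale1r.
have [e He] := IH (fun i => w (widen_ord (leqnSn n) i)).
have [e' He'] := table R (odd (cnt1 (fun i => w (widen_ord (leqnSn n) i))))
   (odd (cnt2 (fun i => w (widen_ord (leqnSn n) i)))) (w ord_max).
exists (e * e'); rewrite big_ord_recr /= He -scalerAl He' scalerA.
by rewrite /cnt1 /cnt2 (big_ord_recr n) (big_ord_recr n) /= !oddD !oddb.
Qed.

Lemma cnt1_perm m (w : 'I_m -> nat) (s : 'S_m) : cnt1 (fun i => w (s i)) = cnt1 w.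
Proof. by rewrite /cnt1 [RHS](reindex_inj (@perm_inj _ s)). Qed.
Lemma cnt2_perm m (w : 'I_m -> nat) (s : 'S_m) : cnt2 (fun i => w (s i)) = cnt2 w.
Proof. by rewrite /cnt2 [RHS](reindex_inj (@perm_inj _ s)). Qed.

Definition Fb (R : realType) m (c : {ffun 'S_m -> R}) (b : 'I_m -> nat) :=
  multilin_eval c (fun i => bm R (b i)).

Lemma Fb_form (R : realType) m (c : {ffun 'S_m -> R}) (b : 'I_m -> nat) :
  exists l : R, Fb c b = l *: tm R (odd (cnt1 b)) (odd (cnt2 b)).
Proof.
rewrite /Fb /multilin_eval.
elim/big_ind: _.
- by exists 0; rewrite scale0r.
- by move=> x y [l1 ->] [l2 ->]; exists (l1 + l2); rewrite scalerDl.
move=> s _; have [e He] := prod_bm R (fun i => b (s i)).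
by exists (c s * e); rewrite He cnt1_perm cnt2_perm scalerA.
Qed.

Definition upd (A : Type) m (a : 'I_m -> A) (j : 'I_m) (x : A) : 'I_m -> A :=
  fun i => if i == j then x else a i.

Lemma prod_upd (R : realType) n (G : 'I_n -> 'M[R]_2) (j : 'I_n) :
  exists P Q, forall x, \prod_(i < n) upd G j x i = P * x * Q.
Proof.
elim: n G j => [|n IH] G j; first by case: j.
have [/eqP -> | ne] := boolP (j == ord_max).
  exists (\prod_(i < n) G (widen_ord (leqnSn n) i)), 1 => x.
  rewrite big_ord_recr /= /upd eqxx mulr1; congr (_ * _).
  apply: eq_bigr => i _; rewrite ifN //; apply/eqP => /(congr1 val) /=.
  by move=> h; have := ltn_ord i; rewrite h ltnn.
have jn : (j < n)%N.
  by have := ltn_ord j; rewrite ltnS leq_eqVlt => /orP [/eqP h|//]; case/eqP: ne; apply: val_inj.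
have [P [Q H]] := IH (fun i => G (widen_ord (leqnSn n) i)) (Ordinal jn).
exists P, (Q * G ord_max) => x.
rewrite big_ord_recr /= {2}/upd ifN; last by rewrite eq_sym.
rewrite mulrA -H; congr (_ * _); apply: eq_bigr => i _.
Qed.

Lemma f_ext (R : realType) m (c : {ffun 'S_m -> R}) (a b : 'I_m -> 'M[R]_2) :
  (forall i, a i = b i) -> multilin_eval c a = multilin_eval c b.
Proof.
move=> h; rewrite /multilin_eval; apply: eq_bigr => s _; congr (_ *: _).
by apply: eq_bigr => i _; rewrite h.
Qed.

Lemma upd_perm (A : Type) m (a : 'I_m -> A) j x (s : 'S_m) i :
  upd a j x (s i) = upd (fun k => a (s k)) (s^-1 j)%g x i.
Proof.
rewrite /upd; have -> : (s i == j) = (i == (s^-1)%g j) by apply/eqP/eqP => [<-|->]; rewrite ?permK ?permKV.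
by [].
Qed.

Lemma f_lin (R : realType) m (c : {ffun 'S_m -> R}) (a : 'I_m -> 'M[R]_2) j x y (t : R) :
  multilin_eval c (upd a j (x + t *: y)) =
  multilin_eval c (upd a j x) + t *: multilin_eval c (upd a j y).
Proof.
rewrite /multilin_eval scaler_sumr -big_split /=; apply: eq_bigr => s _.
have [P [Q H]] := prod_upd (fun k => a (s k)) (s^-1 j)%g.
rewrite (eq_bigr _ (fun i _ => upd_perm a j (x + t *: y) s i)) H.
rewrite (eq_bigr _ (fun i _ => upd_perm a j x s i)) H.
rewrite (eq_bigr _ (fun i _ => upd_perm a j y s i)) H.
rewrite mulrDr mulrDl -scalerAr -scalerAl scalerDr !scalerA mulrC.
by [].
Qed.

Lemma f_upd0 (R : realType) m (c : {ffun 'S_m -> R}) (a : 'I_m -> 'M[R]_2) j :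
  multilin_eval c (upd a j 0) = 0.
Proof.
have := f_lin c a j 0 0 1; rewrite !scale1r addr0 => /eqP.
by rewrite eq_sym -subr_eq0 addrK => /eqP.
Qed.

Lemma f_updZ (R : realType) m (c : {ffun 'S_m -> R}) (a : 'I_m -> 'M[R]_2) j (t : R) y :
  multilin_eval c (upd a j (t *: y)) = t *: multilin_eval c (upd a j y).
Proof. by have := f_lin c a j 0 y t; rewrite add0r f_upd0 add0r. Qed.

Lemma f_updD (R : realType) m (c : {ffun 'S_m -> R}) (a : 'I_m -> 'M[R]_2) j x y :
  multilin_eval c (upd a j (x + y)) =
  multilin_eval c (upd a j x) + multilin_eval c (upd a j y).
Proof. by have := f_lin c a j x y 1; rewrite !scale1r. Qed.

Lemma f_upd_self (R : realType) m (c : {ffun 'S_m -> R}) (a : 'I_m -> 'M[R]_2) j :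
  multilin_eval c (upd a j (a j)) = multilin_eval c a.
Proof. by apply: f_ext => i; rewrite /upd; case: eqP => [->|]. Qed.

Definition symm (R : realType) (x : 'M[R]_2) := x^T = x.

Lemma symmZ (R : realType) (t : R) x : symm x -> symm (t *: x).
Proof. rewrite /symm => h; apply/matrixP => i j; rewrite !mxE; by rewrite -[in RHS]h mxE. Qed.
Lemma symmD (R : realType) (x y : 'M[R]_2) : symm x -> symm y -> symm (x + y).
Proof. rewrite /symm => h h'; apply/matrixP => i j; rewrite !mxE; by rewrite -[in RHS]h -[in RHS]h' !mxE. Qed.
Lemma symm_upd (R : realType) m (a : 'I_m -> 'M[R]_2) j x :
  (forall i, symm (a i)) -> symm x -> forall i, symm (upd a j x i).
Proof. by move=> h hx i; rewrite /upd; case: eqP. Qed.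
Lemma symm_bm (R : realType) k : symm (bm R k).
Proof. by case: k => [|[|k]]; rewrite /symm /bm /e1 /e2; mxcomp. Qed.

Lemma S_scale (R : realType) m (hm : (0 < m)%N) (c : {ffun 'S_m -> R}) X (t : R) :
  image_Sym2 c X -> image_Sym2 c (t *: X).
Proof.
case=> a [ha ->]; exists (upd a (Ordinal hm) (t *: a (Ordinal hm))); split.
  by apply: symm_upd => //; apply: symmZ.
by rewrite f_updZ f_upd_self.
Qed.

Lemma S_zero (R : realType) m (hm : (0 < m)%N) (c : {ffun 'S_m -> R}) :
  image_Sym2 c 0.
Proof.
exists (fun _ => 0); split; first by move=> i; apply/matrixP => ? ?; rewrite !mxE.
rewrite -[LHS](f_upd0 c (fun _ => 0) (Ordinal hm)); apply: f_ext => i; rewrite /upd; by case: eqP.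
Qed.

Lemma S_Fb (R : realType) m (c : {ffun 'S_m -> R}) b : image_Sym2 c (Fb c b).
Proof. by exists (fun i => bm R (b i)); split => // i; apply: symm_bm. Qed.

Lemma prod_conj (R : realType) n (G : 'I_n -> 'M[R]_2) N M (r : R) :
  M * N = r%:M -> N * M = r%:M ->
  r *: \prod_(i < n) (N * G i * M) = r ^+ n *: (N * \prod_(i < n) G i * M).
Proof.
move=> h1 h2; elim: n G => [|n IH] G.
  by rewrite !big_ord0 scale1r mulr1 h2 -scalemx1.
rewrite !big_ord_recr /= scalerAl IH -scalerAl exprSr -scalerA; congr (_ *: _).
rewrite !mulrA -[N * _ * M * N]mulrA h1 -scalemx1 -scalerAr mulr1.
by rewrite -!scalerAl.
Qed.

Lemma f_conj (R : realType) m (c : {ffun 'S_m -> R}) (a : 'I_m -> 'M[R]_2) N M (r : R) :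
  M * N = r%:M -> N * M = r%:M ->
  r *: multilin_eval c (fun i => N * a i * M) = r ^+ m *: (N * multilin_eval c a * M).
Proof.
move=> h1 h2; rewrite /multilin_eval scaler_sumr mulr_sumr mulr_suml scaler_sumr.
apply: eq_bigr => s _; rewrite scalerA mulrC -scalerA (prod_conj _ h1 h2).
by rewrite -scalerAr -scalerAl !scalerA mulrC.
Qed.

Lemma S_conj (R : realType) m (hm : (0 < m)%N) (c : {ffun 'S_m -> R}) X (M : 'M[R]_2) (r : R) :
  r != 0 -> M * M^T = r%:M -> M^T * M = r%:M ->
  image_Sym2 c X -> image_Sym2 c (M^T * X * M).
Proof.
move=> r0 h1 h2 [a [ha ->]].
have -> : M^T * multilin_eval c a * M =
   (r / r ^+ m) *: multilin_eval c (fun i => M^T * a i * M).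
  by rewrite mulrC -scalerA (f_conj _ _ h1 h2) scalerA mulVf ?scale1r // expf_neq0.
apply: S_scale => //; exists (fun i => M^T * a i * M); split => // i.
by rewrite -!mulmxE !trmx_mul trmxK ha mulmxA.
Qed.

Definition co (R : realType) (T : bool * bool) (X : 'M[R]_2) : R :=
  let a := X ord0 ord0 in let d := X ord_max ord_max in
  let b := X ord0 ord_max in let c := X ord_max ord0 in
  match T with
  | (false, false) => (a + d) / 2
  | (true, false) => (a - d) / 2
  | (false, true) => (b + c) / 2
  | (true, true) => (b - c) / 2
  end.

Lemma co_lin (R : realType) T (X Y : 'M[R]_2) (t : R) :
  co T (X + t *: Y) = co T X + t * co T Y.
Proof. by case: T => [[] []]; rewrite /co !mxE; ring. Qed.

Lemma co_add (R : realType) T (X Y : 'M[R]_2) : co T (X + Y) = co T X + co T Y.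
Proof. by have := co_lin T X Y 1; rewrite scale1r mul1r. Qed.
Lemma co_scale (R : realType) T (Y : 'M[R]_2) (t : R) : co T (t *: Y) = t * co T Y.
Proof. by have := co_lin T 0 Y t; rewrite add0r => ->; rewrite /co !mxE; case: T => [[] []]; ring. Qed.

Lemma two_neq0 (R : realType) : (2 : R) != 0.
Proof. by rewrite pnatr_eq0. Qed.

Lemma co_tm (R : realType) T b1 b2 : co T (tm R b1 b2) = ((b1, b2) == T)%:R.
Proof.
have h2 := two_neq0 R.
by case: T => [[] []]; case: b1; case: b2; rewrite /co /tm /Emx /e1 /e2 /=;
  do 4 (rewrite ?mxE ?big_ord_recr ?big_ord0 /=); field.
Qed.

Lemma decomp (R : realType) (X : 'M[R]_2) :
  X = co (false,false) X *: tm R false false + co (true,false) X *: tm R true false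
    + co (false,true) X *: tm R false true + co (true,true) X *: tm R true true.
Proof.
have h2 := two_neq0 R.
apply/matrixP => i j; case: (ord2P i) => ->; case: (ord2P j) => ->;
rewrite /co /tm /Emx /e1 /e2 /=; do 4 (rewrite ?mxE ?big_ord_recr ?big_ord0 /=); field; by [].
Qed.

Lemma symm_coE (R : realType) (X : 'M[R]_2) : symm X -> co (true,true) X = 0.
Proof.
move=> h; have := congr1 (fun M : 'M[R]_2 => M ord0 ord_max) h; rewrite /= mxE => ->.
by rewrite /co subrr mul0r.
Qed.

Lemma symm_decomp (R : realType) (X : 'M[R]_2) : symm X ->
  X = co (false,false) X *: bm R 0 + co (true,false) X *: bm R 1 + co (false,true) X *: bm R 2.
Proof. by move=> h; rewrite {1}(decomp X) symm_coE // scale0r addr0. Qed.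

Lemma co_vanish (R : realType) m (c : {ffun 'S_m -> R}) T :
  (forall b, co T (Fb c b) = 0) ->
  forall a, (forall i, symm (a i)) -> co T (multilin_eval c a) = 0.
Proof.
move=> hF.
suff H : forall k, (k <= m)%N -> forall a (b : 'I_m -> nat), (forall i, symm (a i)) ->
  (forall i : 'I_m, (k <= i)%N -> a i = bm R (b i)) -> co T (multilin_eval c a) = 0.
  move=> a ha; apply: (H m (leqnn m) a (fun _ => 0%N) ha) => i.
  by rewrite leqNgt ltn_ord.
elim=> [|k IH] km a b ha hab.
  by rewrite (f_ext c (b := fun i => bm R (b i))) ?hF // => i; apply: hab.
pose j := Ordinal km.
have hk : forall k', co T (multilin_eval c (upd a j (bm R k'))) = 0.
  move=> k'; apply: (IH (ltnW km) _ (upd b j k')).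
    by apply: symm_upd => //; apply: symm_bm.
  move=> i ki; rewrite /upd; case: eqP => // /eqP ne; apply: hab.
  rewrite ltn_neqAle ki andbT; apply: contra ne => /eqP e; apply/eqP; apply: val_inj => /=.
  by rewrite e.
rewrite -(f_upd_self c a j) (symm_decomp (ha j)) !f_updD !f_updZ !co_add !co_scale !hk.
by rewrite !mulr0 !addr0.
Qed.

Definition Dset m (b b' : 'I_m -> nat) : {set 'I_m} := [set i | b i != b' i].
Definition gam m (W : {set 'I_m}) (b b' : 'I_m -> nat) i := if i \in W then b' i else b i.
Definition config (R : realType) m (b b' : 'I_m -> nat) (V U0 : {set 'I_m}) : 'I_m -> 'M[R]_2 :=
  fun i => if i \in V then bm R (b i) + bm R (b' i) else if i \in U0 then bm R (b' i) else bm R (b i).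

Lemma claim (R : realType) m (c : {ffun 'S_m -> R}) (b b' : 'I_m -> nat) :
  let D := Dset b b' in
  D != set0 ->
  (forall W : {set 'I_m}, W \subset D -> W != set0 -> W != D -> Fb c (gam W b b') = 0) ->
  forall n (V U0 : {set 'I_m}), #|V| = n -> V \subset D -> U0 \subset D -> (forall i, i \in V -> i \notin U0) ->
  multilin_eval c (config R b b' V U0) =
    (if U0 == set0 then Fb c b else 0) + (if V :|: U0 == D then Fb c b' else 0).
Proof.
move=> D hD hvan; elim=> [|n IH] V U0 hV VD UD dis.
  have V0 : V = set0 by apply/eqP; rewrite -cards_eq0 hV.
  subst V; rewrite set0U.
  have -> : multilin_eval c (config R b b' set0 U0) = Fb c (gam U0 b b').
    by apply: f_ext => i; rewrite /config /gam inE; case: (i \in U0).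
  have [->|U0n] := eqVneq U0 set0.
    rewrite eq_sym (negbTE hD) addr0; apply: f_ext => i.
    by rewrite /gam inE.
  have [->|U0D] := eqVneq U0 D.
    rewrite add0r; apply: f_ext => i; rewrite /gam.
    case: ifP => // /negbT; rewrite /D /Dset inE negbK => /eqP ->; by [].
  by rewrite hvan // add0r.
have : (0 < #|V|)%N by rewrite hV.
rewrite card_gt0 => /set0Pn [j jV].
pose V' := V :\ j.
have hV' : #|V'| = n by rewrite /V' (cardsD1 j V) jV in hV; case: hV.
have jD : j \in D by apply: (subsetP VD).
have jU : j \notin U0 by apply: dis.
have jV' : j \notin V' by rewrite /V' !inE eqxx.
have V'D : V' \subset D by apply: subset_trans VD; apply: subsetDl.
have e1' : forall i, config R b b' V U0 i =
    upd (config R b b' V' U0) j (bm R (b j) + bm R (b' j)) i.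
  move=> i; rewrite /upd /config; case: eqP => [->|/eqP ne]; first by rewrite jV.
  by rewrite /V' !inE ne.
rewrite (f_ext c e1') f_updD.
have -> : multilin_eval c (upd (config R b b' V' U0) j (bm R (b j))) =
          multilin_eval c (config R b b' V' U0).
  apply: f_ext => i; rewrite /upd /config; case: eqP => // ->.
  by rewrite (negbTE jV') (negbTE jU).
have -> : multilin_eval c (upd (config R b b' V' U0) j (bm R (b' j))) =
          multilin_eval c (config R b b' V' (j |: U0)).
  apply: f_ext => i; rewrite /upd /config; case: eqP => [->|/eqP ne].
    by rewrite (negbTE jV') setU11.
  by rewrite !inE (negbTE ne).
rewrite (IH V' U0) //; last by move=> i; rewrite /V' !inE => /andP [_ /dis].
rewrite (IH V' (j |: U0)) //; first last.
- move=> i; rewrite /V' !inE => /andP [ne /dis]; by rewrite (negbTE ne).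
- by rewrite subUset sub1set jD UD.
have -> : (j |: U0 == set0) = false.
  by apply/negbTE/set0Pn; exists j; rewrite setU11.
have -> : (V' :|: U0 == D) = false.
  apply/negbTE/eqP => h; have : j \in V' :|: U0 by rewrite h.
  by rewrite inE (negbTE jV') (negbTE jU).
have -> : V' :|: (j |: U0) = V :|: U0.
  apply/setP => i; rewrite !inE; case: eqP => [->|_]; by rewrite ?jV ?orbT.
by rewrite addr0 add0r.
Qed.

Lemma symm_config (R : realType) m (b b' : 'I_m -> nat) V U0 i : symm (config R b b' V U0 i).
Proof.
rewrite /config; case: (i \in V); first by apply: symmD; apply: symm_bm.
by case: (i \in U0); apply: symm_bm.
Qed.

Lemma family (R : realType) m (c : {ffun 'S_m -> R}) (b b' : 'I_m -> nat) :
  let D := Dset b b' in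
  D != set0 ->
  (forall W : {set 'I_m}, W \subset D -> W != set0 -> W != D -> Fb c (gam W b b') = 0) ->
  forall t : R, image_Sym2 c (Fb c b + t *: Fb c b').
Proof.
move=> D hD hvan t.
have [j0 j0D] := set0Pn _ hD.
pose V := D :\ j0.
have j0V : j0 \notin V by rewrite /V !inE eqxx.
exists (upd (config R b b' V set0) j0 (bm R (b j0) + t *: bm R (b' j0))); split.
  apply: symm_upd; first by move=> i; apply: symm_config.
  by apply: symmD; [apply: symm_bm | apply: symmZ; apply: symm_bm].
rewrite f_lin.
have -> : multilin_eval c (upd (config R b b' V set0) j0 (bm R (b j0))) =
          multilin_eval c (config R b b' V set0).
  apply: f_ext => i; rewrite /upd /config; case: eqP => // ->.
  by rewrite (negbTE j0V) inE.
have -> : multilin_eval c (upd (config R b b' V set0) j0 (bm R (b' j0))) =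
          multilin_eval c (config R b b' V [set j0]).
  apply: f_ext => i; rewrite /upd /config; case: eqP => [->|/eqP ne].
    by rewrite (negbTE j0V) set11.
  by rewrite !inE (negbTE ne).
have VD : V \subset D by apply: subsetDl.
rewrite (claim hD hvan (erefl #|V|)) ?sub0set //; last by move=> i _; rewrite inE.
rewrite (claim hD hvan (erefl #|V|)) //; first last.
- by move=> i; rewrite /V !inE => /andP [ne _]; rewrite (negbTE ne).
- by rewrite sub1set.
rewrite eqxx setU0.
have -> : (V == D) = false.
  by apply/negbTE/eqP => h; move: j0V; rewrite h j0D.
have -> : ([set j0] == set0) = false.
  by apply/negbTE/set0Pn; exists j0; rewrite set11.
have -> : (V :|: [set j0] == D).
  have j0D' : b j0 != b' j0 by move: j0D; rewrite inE.
  apply/eqP/setP => i; rewrite /V !inE; case: eqP => [->|_] /=; by rewrite ?eqxx ?orbT ?orbF ?j0D'.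
by rewrite addr0 add0r.
Qed.

Definition typ m (b : 'I_m -> nat) := (odd (cnt1 b), odd (cnt2 b)).

Lemma minpair (R : realType) m (c : {ffun 'S_m -> R}) (TA TB : pred (bool * bool)) :
  (forall T, TA T -> ~~ TB T) ->
  (forall b, Fb c b != 0 -> TA (typ b) || TB (typ b)) ->
  forall b0 b1, TA (typ b0) -> Fb c b0 != 0 -> TB (typ b1) -> Fb c b1 != 0 ->
  exists b b', [/\ TA (typ b), Fb c b != 0, TB (typ b'), Fb c b' != 0 &
                   forall t, image_Sym2 c (Fb c b + t *: Fb c b')].
Proof.
move=> hAB hK.
suff H : forall n b b', (#|Dset b b'| < n)%N -> TA (typ b) -> Fb c b != 0 ->
    TB (typ b') -> Fb c b' != 0 ->
  exists b b', [/\ TA (typ b), Fb c b != 0, TB (typ b'), Fb c b' != 0 &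
                   forall t, image_Sym2 c (Fb c b + t *: Fb c b')].
  by move=> b0 b1; apply: (H #|Dset b0 b1|.+1).
elim=> [//|n IH] b b' hn hA nzA hB nzB.
case: (Classical_Prop.classic (exists W : {set 'I_m}, [/\ W \subset Dset b b', W != set0,
          W != Dset b b' & Fb c (gam W b b') != 0])).
  case=> W [WD W0 WD' nz]; case/orP: (hK _ nz) => [hA'|hB'].
    apply: (IH (gam W b b') b') => //.
    have -> : Dset (gam W b b') b' = Dset b b' :\: W.
      apply/setP => i; rewrite /Dset /gam !inE; case: ifP => iW /=; first by rewrite eqxx.
      by [].
    rewrite cardsD (setIidPr WD).
    have : (0 < #|W|)%N by rewrite card_gt0.
    have := subset_leq_card WD; move: hn; rewrite ltnS.
    lia.
  apply: (IH b (gam W b b')) => //.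
  have -> : Dset b (gam W b b') = W.
    apply/setP => i; rewrite /Dset /gam !inE; case: ifP => iW /=; last by rewrite eqxx.
    by have := subsetP WD i iW; rewrite inE.
  have : (#|W| < #|Dset b b'|)%N by apply: proper_card; rewrite properEneq WD' WD.
  move: hn; rewrite ltnS; lia.
move=> hno.
have hD : Dset b b' != set0.
  apply/negP => /eqP hD.
  have e : forall i, b i = b' i.
    move=> i; apply/eqP; apply: contraT => ne.
    have : i \in Dset b b' by rewrite inE.
    by rewrite hD inE.
  have : typ b = typ b'.
    by rewrite /typ /cnt1 /cnt2; congr (odd _, odd _); apply: eq_bigr => i _; rewrite e.
  by move=> te; move: (hAB _ hA); rewrite te hB.
exists b, b'; split => //; apply: family => // W WD W0 WD'.
apply/eqP; apply: contraT => nz; case: hno; exists W; split => //.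
Qed.

Definition present (R : realType) m (c : {ffun 'S_m -> R}) T :=
  exists b, typ b = T /\ Fb c b != 0.

Lemma Fb_typ (R : realType) m (c : {ffun 'S_m -> R}) b :
  exists l : R, Fb c b = l *: tm R (typ b).1 (typ b).2.
Proof. exact: Fb_form. Qed.

Lemma S_sub (R : realType) m (c : {ffun 'S_m -> R}) T X :
  ~ present c T -> image_Sym2 c X -> co T X = 0.
Proof.
move=> np [a [ha ->]]; apply: co_vanish => // b.
have [l hl] := Fb_typ c b.
have [e|ne] := eqVneq (typ b) T.
  suff -> : Fb c b = 0 by rewrite /co !mxE; case: T {np e} => [[] []]; rewrite ?subrr ?addr0 mul0r.
  by apply/eqP; apply: contraT => nz; case: np; exists b.
rewrite hl co_scale co_tm.
by rewrite -surjective_pairing (negbTE ne) mulr0.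
Qed.

Lemma present_elem (R : realType) m (c : {ffun 'S_m -> R}) T :
  present c T -> exists b (l : R), [/\ typ b = T, l != 0 & Fb c b = l *: tm R T.1 T.2].
Proof.
case=> b [tb nz]; have [l hl] := Fb_typ c b; exists b, l; split => //.
  by apply: contraNneq nz => l0; rewrite hl l0 scale0r.
by rewrite hl tb.
Qed.

Definition Mrot (R : realType) (x y : R) : 'M[R]_2 := x *: 1 - y *: Emx R.

Lemma Mrot_orth (R : realType) (x y : R) :
  Mrot x y * (Mrot x y)^T = (x ^+ 2 + y ^+ 2)%:M /\
  (Mrot x y)^T * Mrot x y = (x ^+ 2 + y ^+ 2)%:M.
Proof. by split; rewrite /Mrot /Emx /e1 /e2; mxcomp. Qed.

Lemma Mrot_1 (R : realType) (x y : R) :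
  (Mrot x y)^T * 1 * Mrot x y = (x ^+ 2 + y ^+ 2) *: 1.
Proof. by rewrite /Mrot /Emx /e1 /e2; mxcomp. Qed.
Lemma Mrot_E (R : realType) (x y : R) :
  (Mrot x y)^T * Emx R * Mrot x y = (x ^+ 2 + y ^+ 2) *: Emx R.
Proof. by rewrite /Mrot /Emx /e1 /e2; mxcomp. Qed.
Lemma Mrot_e1 (R : realType) (x y : R) :
  (Mrot x y)^T * e1 R * Mrot x y = (x ^+ 2 - y ^+ 2) *: e1 R + (- (2 * x * y)) *: e2 R.
Proof. by rewrite /Mrot /Emx /e1 /e2; mxcomp. Qed.
Lemma Mrot_e2 (R : realType) (x y : R) :
  (Mrot x y)^T * e2 R * Mrot x y = (2 * x * y) *: e1 R + (x ^+ 2 - y ^+ 2) *: e2 R.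
Proof. by rewrite /Mrot /Emx /e1 /e2; mxcomp. Qed.

Lemma solver (R : realType) (p q : R) : (p != 0) || (q != 0) ->
  exists x y k : R, [/\ x ^+ 2 + y ^+ 2 != 0, k != 0, x ^+ 2 - y ^+ 2 = k * p &
                       - (2 * x * y) = k * q].
Proof.
have [-> p0|q0 _] := eqVneq q 0.
  rewrite orbF in p0.
  exists 1, 0, p^-1; split.
  - by rewrite expr1n expr0n addr0 oner_eq0.
  - by rewrite invr_eq0.
  - by rewrite expr1n expr0n subr0 mulVf.
  - by rewrite !mulr0 oppr0.
pose r := Num.sqrt (p ^+ 2 + q ^+ 2).
have hr : r ^+ 2 = p ^+ 2 + q ^+ 2 by rewrite sqr_sqrtr // addr_ge0 // sqr_ge0.
pose x := (r - p) / q.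
have x0 : x != 0.
  rewrite /x mulf_neq0 ?invr_eq0 //; rewrite subr_eq0; apply/eqP => e.
  by move: hr; rewrite e => /eqP; rewrite eq_sym -subr_eq0 addrC addKr sqrf_eq0 (negbTE q0).
exists x, 1, (- (2 * x) / q); split.
- by rewrite expr1n; apply: lt0r_neq0; rewrite ltr_wpDl ?sqr_ge0.
- by rewrite mulf_neq0 ?invr_eq0 // oppr_eq0 mulf_neq0 // two_neq0.
- apply/eqP; rewrite -subr_eq0.
  have -> : x ^+ 2 - 1 ^+ 2 - - (2 * x) / q * p = (r ^+ 2 - (p ^+ 2 + q ^+ 2)) / q ^+ 2.
    by rewrite /x; field.
  by rewrite hr subrr mul0r.
- by rewrite mulr1 mulfVK.
Qed.

Lemma rot_dir (R : realType) (y : bool) (p q : R) : (p != 0) || (q != 0) ->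
  exists x z k : R, [/\ x ^+ 2 + z ^+ 2 != 0, k != 0 &
    (Mrot x z)^T * (if y then e1 R else e2 R) * Mrot x z = k *: (p *: e1 R + q *: e2 R)].
Proof.
move=> pq; case: y.
  have [x [z [k [h1 h2 h3 h4]]]] := solver pq.
  by exists x, z, k; split => //; rewrite Mrot_e1 h3 h4 scalerDr !scalerA.
have pq' : (q != 0) || (- p != 0) by rewrite oppr_eq0 orbC.
have [x [z [k [h1 h2 h3 h4]]]] := solver pq'.
exists x, z, k; split => //; rewrite Mrot_e2 h3.
have -> : 2 * x * z = k * p by rewrite -[LHS]opprK h4 mulrN opprK.
by rewrite scalerDr !scalerA.
Qed.

Lemma plane (R : realType) m (hm : (0 < m)%N) (c : {ffun 'S_m -> R}) (y : bool) (l : R) :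
  l != 0 -> image_Sym2 c (l *: (if y then e1 R else e2 R)) ->
  forall p q, image_Sym2 c (p *: e1 R + q *: e2 R).
Proof.
move=> l0 hS p q.
have [pq|] := boolP ((p != 0) || (q != 0)); last first.
  rewrite negb_or !negbK => /andP [/eqP -> /eqP ->].
  by rewrite !scale0r addr0; apply: S_zero.
have [x [z [k [h1 h2 h3]]]] := rot_dir y pq.
have [o1 o2] := Mrot_orth x z.
have := S_conj hm h1 o1 o2 hS.
rewrite -scalerAr -scalerAl h3 scalerA => /(S_scale hm (l * k)^-1).
by rewrite scalerA mulVf ?scale1r // mulf_neq0.
Qed.

Definition Psw (R : realType) : 'M[R]_2 := e1 R + e2 R.
Lemma Psw_orth (R : realType) : Psw R * (Psw R)^T = 2%:M /\ (Psw R)^T * Psw R = 2%:M.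
Proof. by split; rewrite /Psw /e1 /e2; mxcomp. Qed.
Lemma Psw_e1 (R : realType) : (Psw R)^T * e1 R * Psw R = 2 *: e2 R.
Proof. by rewrite /Psw /e1 /e2; mxcomp. Qed.
Lemma Psw_e2 (R : realType) : (Psw R)^T * e2 R * Psw R = 2 *: e1 R.
Proof. by rewrite /Psw /e1 /e2; mxcomp. Qed.

Lemma co_e1 (R : realType) T : co T (e1 R) = ((true, false) == T)%:R.
Proof. exact: (@co_tm R T true false). Qed.
Lemma co_e2 (R : realType) T : co T (e2 R) = ((false, true) == T)%:R.
Proof. exact: (@co_tm R T false true). Qed.
Lemma co_E (R : realType) T : co T (Emx R) = ((true, true) == T)%:R.
Proof. exact: (@co_tm R T true true). Qed.
Lemma co_1 (R : realType) T : co T (1 : 'M[R]_2) = ((false, false) == T)%:R.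
Proof. exact: (@co_tm R T false false). Qed.

Lemma swap_present (R : realType) m (hm : (0 < m)%N) (c : {ffun 'S_m -> R}) (y : bool) :
  present c (y, ~~ y) -> present c (~~ y, y).
Proof.
move=> /present_elem [b [l [_ l0 hb]]].
apply: Classical_Prop.NNPP => np.
have [o1 o2] := Psw_orth R.
have := S_conj hm (two_neq0 R) o1 o2 (S_Fb c b).
rewrite hb /= -scalerAr -scalerAl => /(S_sub np).
case: y np {hb} => np; rewrite ?Psw_e1 ?Psw_e2 scalerA co_scale ?co_e1 ?co_e2 /= mulr1.
  by apply/eqP; rewrite mulf_neq0 // two_neq0.
by apply/eqP; rewrite mulf_neq0 // two_neq0.
Qed.

Lemma S_eq (R : realType) m (c : {ffun 'S_m -> R}) A B :
  image_Sym2 c A -> A = B -> image_Sym2 c B.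
Proof. by move=> h <-. Qed.

Lemma threeD (R : realType) m (hm : (0 < m)%N) (c : {ffun 'S_m -> R}) (Z : 'M[R]_2)
    (y : bool) (l mu : R) :
  (forall x z, (Mrot x z)^T * Z * Mrot x z = (x ^+ 2 + z ^+ 2) *: Z) ->
  l != 0 -> mu != 0 ->
  (forall t, image_Sym2 c (l *: Z + t *: (mu *: (if y then e1 R else e2 R)))) ->
  (forall p q, image_Sym2 c (p *: e1 R + q *: e2 R)) ->
  forall x p q, image_Sym2 c (x *: Z + (p *: e1 R + q *: e2 R)).
Proof.
move=> hZ l0 mu0 hfam hpl x p q.
have [pq|] := boolP ((p != 0) || (q != 0)); last first.
  rewrite negb_or !negbK => /andP [/eqP -> /eqP ->].
  have := S_scale hm (x / l) (hfam 0).
  by rewrite !scale0r !addr0 scalerA mulfVK.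
have [->|x0] := eqVneq x 0; first by rewrite scale0r add0r.
have [a [z [k [h1 h2 h3]]]] := rot_dir y pq.
have [o1 o2] := Mrot_orth a z.
have hZ' := hZ a z.
move: (a ^+ 2 + z ^+ 2) h1 o1 o2 hZ' => r h1 o1 o2 hZ'.
have := S_conj hm h1 o1 o2 (hfam (l * r / (x * mu * k))).
rewrite (mulrDr (Mrot a z)^T) (mulrDl _ _ (Mrot a z)) -!scalerAr -!scalerAl hZ' h3 !scalerA.
move=> /(S_scale hm (x / (l * r))) /S_eq; apply.
rewrite !scalerDr !scalerA; congr (_ + (_ + _)); congr (_ *: _); field; by rewrite ?h1 ?l0 ?h2 ?mu0 ?x0.
Qed.

Lemma K_of (R : realType) m (c : {ffun 'S_m -> R}) (TA TB : pred (bool * bool)) :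
  (forall T, ~~ TA T -> ~~ TB T -> ~ present c T) ->
  forall b, Fb c b != 0 -> TA (typ b) || TB (typ b).
Proof.
move=> h b nz; apply/negPn/negP => /norP [a b']; apply: (h _ a b'); by exists b.
Qed.

Lemma Fb_nz (R : realType) m (c : {ffun 'S_m -> R}) b :
  Fb c b != 0 -> exists l : R, l != 0 /\ Fb c b = l *: tm R (typ b).1 (typ b).2.
Proof.
move=> nz; have [l hl] := Fb_typ c b; exists l; split => //.
by apply: contraNneq nz => l0; rewrite hl l0 scale0r.
Qed.

Lemma case3D (R : realType) m (hm : (0 < m)%N) (c : {ffun 'S_m -> R}) (u : bool) :
  present c (u, u) -> ~ present c (~~ u, ~~ u) ->
  present c (true, false) ->
  forall x p q, image_Sym2 c (x *: tm R u u + (p *: e1 R + q *: e2 R)).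
Proof.
move=> pZ npZ' p1.
have [b0 [nz0 tb0]] : exists b, Fb c b != 0 /\ typ b = (u, u).
  by case: pZ => b [t nz]; exists b.
have p2 := swap_present hm p1; simpl in p2.
have [b1 [nz1 tb1]] : exists b, Fb c b != 0 /\ typ b = (true, false).
  by case: p1 => b [t nz]; exists b.
have hK : forall b, Fb c b != 0 -> pred1 (u, u) (typ b) || [pred T | T.1 != T.2] (typ b).
  apply: K_of => -[[] []]; case: u npZ' {pZ tb0} => np //=.
have hA0 : pred1 (u, u) (typ b0) by rewrite tb0 /=.
have hB1 : [pred T | T.1 != T.2] (typ b1) by rewrite tb1.
have hAB : forall T, pred1 (u, u) T -> ~~ [pred T | T.1 != T.2] T.
  by move=> T /eqP -> /=; rewrite eqxx.
have [b [b' [hA nzA hB nzB hfam]]] := minpair hAB hK hA0 nz0 hB1 nz1.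
have [l [l0 hl]] := Fb_nz nzA.
have [mu [mu0 hmu]] := Fb_nz nzB.
move: hA => /eqP tA; rewrite tA /= in hl.
move: hB hmu; case: (typ b') => y v /= yv hmu.
have hY : tm R y v = if y then e1 R else e2 R by case: y v yv {hmu} => [] [].
rewrite hY in hmu.
have hpl : forall p q, image_Sym2 c (p *: e1 R + q *: e2 R).
  have [b2 [l2 [_ l20 hb2]]] := present_elem p1.
  apply: (plane hm (y := true) l20); rewrite /= -hb2; exact: S_Fb.
apply: (threeD hm (y := y) _ l0 mu0) => //.
  by move=> x z; case: u {pZ npZ' tb0 hK hA0 hAB hl tA}; [apply: Mrot_E | apply: Mrot_1].
by move=> t; rewrite -hl -hmu; apply: hfam.
Qed.


Lemma case5 (R : realType) m (hm : (0 < m)%N) (c : {ffun 'S_m -> R}) :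
  present c (false, false) -> present c (true, true) ->
  ~ present c (true, false) -> ~ present c (false, true) ->
  forall s t, image_Sym2 c (s *: 1 + t *: Emx R).
Proof.
move=> pI pE n1 n2.
have [b0 [nz0 tb0]] : exists b, Fb c b != 0 /\ typ b = (false, false).
  by case: pI => b [t nz]; exists b.
have [b1 [nz1 tb1]] : exists b, Fb c b != 0 /\ typ b = (true, true).
  by case: pE => b [t nz]; exists b.
have hK : forall b, Fb c b != 0 -> pred1 (false, false) (typ b) || pred1 (true, true) (typ b).
  by apply: K_of => -[[] []].
have hA0 : pred1 (false, false) (typ b0) by rewrite tb0 /=.
have hB1 : pred1 (true, true) (typ b1) by rewrite tb1 /=.
have hAB : forall T, pred1 (false, false) T -> ~~ pred1 (true, true) T.
  by move=> T /eqP -> /=.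
have [b [b' [hA nzA hB nzB hfam]]] := minpair hAB hK hA0 nz0 hB1 nz1.
have [l [l0 hl]] := Fb_nz nzA.
have [mu [mu0 hmu]] := Fb_nz nzB.
move: hA hB => /eqP tA /eqP tB; rewrite tA /= in hl; rewrite tB /= in hmu.
move=> s t.
have [->|s0] := eqVneq s 0.
  rewrite scale0r add0r; have := S_scale hm (t / mu) (S_Fb c b').
  by rewrite hmu scalerA mulfVK.
have := S_scale hm (s / l) (hfam (t * l / (s * mu))).
move/S_eq; apply; rewrite hl hmu !scalerDr !scalerA; congr (_ + _); congr (_ *: _);
  field; by rewrite ?s0 ?l0 ?mu0.
Qed.

Lemma trace_co (R : realType) (X : 'M[R]_2) : \tr X = 2 * co (false, false) X.
Proof.
rewrite /mxtrace !big_ord_recr big_ord0 /= add0r /co.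
set i0 := widen_ord _ _.
have -> : i0 = ord0 by apply: val_inj.
by rewrite mulrC divfK // two_neq0.
Qed.

Lemma scal_one (R : realType) (t : R) : t *: (1 : 'M[R]_2) = t%:M.
Proof. by rewrite scalemx1. Qed.

Lemma span_scaled (R : realType) (B : seq 'M[R]_2) (v T : 'M[R]_2) (l : R) :
  v = l *: T -> l != 0 -> v \in B -> T \in <<B>>%VS.
Proof.
move=> -> l0 vB; have -> : T = l^-1 *: (l *: T) by rewrite scalerA mulVf ?scale1r.
by apply: memvZ; apply: memv_span.
Qed.

Theorem mainTheorem1 (R : realType) (m : nat) (hm : (0 < m)%N)
    (c : {ffun 'S_m -> R}) :
  let S := image_Sym2 c in
  (forall X, S X <-> X = 0) \/
  (forall X, S X <-> exists t : R, X = t *: Emx R) \/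
  (forall X, S X <-> exists t : R, X = t%:M) \/
  (forall X, S X <-> exists s t : R, X = s *: e1 R + t *: e2 R) \/
  (forall X, S X <-> exists s t : R, X = s%:M + t *: Emx R) \/
  (forall X, S X <-> \tr X = 0) \/
  (forall X, S X <-> X^T = X) \/
  (exists B : seq 'M[R]_2, (forall X, X \in B -> S X) /\ basis_of fullv B).
Proof.
cbv zeta.
have dec : forall X : 'M[R]_2, X = co (false,false) X *: 1 + co (true,false) X *: e1 R
    + co (false,true) X *: e2 R + co (true,true) X *: Emx R by move=> X; exact: decomp.
have line : forall T, present c T -> forall t, image_Sym2 c (t *: tm R T.1 T.2).
  move=> T pT t; have [b [l [_ l0 hb]]] := present_elem pT.
  have := S_scale hm (t / l) (S_Fb c b); by rewrite hb scalerA mulfVK.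
case: (Classical_Prop.classic (present c (false,false))) => pI;
case: (Classical_Prop.classic (present c (true,true))) => pE;
case: (Classical_Prop.classic (present c (true,false))) => p1.
all: first [ have p2 := swap_present hm (y := true) p1
           | have p2 : ~ present c (false, true) by move=> /(swap_present hm (y := false)) ].
(* pI pE p1 : case 8 *)
- do 7 right.
  have [bI [lI [_ lI0 hI]]] := present_elem pI.
  have [b1 [l1 [_ l10 h1]]] := present_elem p1.
  have [b2 [l2 [_ l20 h2]]] := present_elem p2.
  have [bE [lE [_ lE0 hE]]] := present_elem pE.
  exists [:: Fb c bI; Fb c b1; Fb c b2; Fb c bE]; split.
    by move=> X; rewrite !inE => /or4P [] /eqP ->; apply: S_Fb.
  rewrite basisEdim /= dimvf dim_matrix /= leqnn andbT.
  apply/subvP => X _; rewrite (dec X).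
  apply: memvD; [apply: memvD; [apply: memvD|]|]; apply: memvZ.
  - by apply: (span_scaled hI lI0); rewrite !inE eqxx.
  - by apply: (span_scaled h1 l10); rewrite !inE eqxx ?orbT.
  - by apply: (span_scaled h2 l20); rewrite !inE eqxx ?orbT.
  - by apply: (span_scaled hE lE0); rewrite !inE eqxx ?orbT.
(* pI pE ~p1 : case 5 *)
- do 4 right; left; move=> X; split.
    move=> hX; exists (co (false,false) X), (co (true,true) X).
    by rewrite {1}(dec X) (S_sub p1 hX) (S_sub p2 hX) !scale0r !addr0 scal_one.
  by case=> s [t ->]; rewrite -scal_one; apply: case5.
(* pI ~pE p1 : case 7 *)
- do 6 right; left; move=> X; split.
    move=> hX; rewrite (dec X) (S_sub pE hX) scale0r addr0.
    apply: symmD; [apply: symmD|]; apply: symmZ;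
      [exact: (symm_bm R 0) | exact: (symm_bm R 1) | exact: (symm_bm R 2)].
  move=> hX; rewrite (dec X) (symm_coE hX) scale0r addr0 -addrA.
  exact: (case3D hm (u := false) pI pE p1).
(* pI ~pE ~p1 : case 3 *)
- do 2 right; left; move=> X; split.
    move=> hX; exists (co (false,false) X).
    by rewrite {1}(dec X) (S_sub pE hX) (S_sub p1 hX) (S_sub p2 hX) !scale0r !addr0 scal_one.
  by case=> t ->; rewrite -scal_one; exact: (line (false,false) pI t).
(* ~pI pE p1 : case 6 *)
- do 5 right; left; move=> X; split.
    by move=> hX; rewrite trace_co (S_sub pI hX) mulr0.
  move=> htr.
  have cI0 : co (false,false) X = 0.
    by move: htr; rewrite trace_co => /eqP; rewrite mulf_eq0 (negbTE (two_neq0 R)) => /eqP.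
  rewrite (dec X) cI0 scale0r add0r addrC.
  exact: (case3D hm (u := true) pE pI p1).
(* ~pI pE ~p1 : case 2 *)
- right; left; move=> X; split.
    move=> hX; exists (co (true,true) X).
    by rewrite {1}(dec X) (S_sub pI hX) (S_sub p1 hX) (S_sub p2 hX) !scale0r !add0r.
  by case=> t ->; exact: (line (true,true) pE t).
(* ~pI ~pE p1 : case 4 *)
- do 3 right; left; move=> X; split.
    move=> hX; exists (co (true,false) X), (co (false,true) X).
    by rewrite {1}(dec X) (S_sub pI hX) (S_sub pE hX) !scale0r add0r addr0.
  case=> s [t ->]; have [b [l [_ l0 hb]]] := present_elem p1.
  apply: (plane hm (y := true) l0); rewrite /= -hb; exact: S_Fb.
(* ~pI ~pE ~p1 : case 1 *)
- left; move=> X; split.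
    move=> hX; rewrite (dec X) (S_sub pI hX) (S_sub pE hX) (S_sub p1 hX) (S_sub p2 hX).
    by rewrite !scale0r !addr0.
  by move=> ->; apply: S_zero.
Qed.
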